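(* Let $\mathcal{A}=(Q,\delta,I,F)$ be a complete Büchi automaton with $n=|Q|$, let $\mathcal{B}_S$ be the automaton produced from $\mathcal{A}$ by Schewe's rank-based complementation construction (described in the context), and let $\mathcal{B}_S^{\mathit{de}}$ be the automaton obtained from the same construction in which every occurrence of $Q_2$ is replaced by $$Q_2^{\mathit{de}} = Q_2\setminus\{(S,O,f,i)\in Q_2 \mid \exists p,q\in S:\ p\preceq_{\mathit{de}} q \wedge f(p)>\lceil f(q)\rceil\},$$ where $\lceil x\rceil$ denotes the smallest even number $\ge x$. Then $\mathcal{L}(\mathcal{B}_S^{\mathit{de}})=\mathcal{L}(\mathcal{B}_S)$.
   Context: Fix a finite nonempty alphabet $\Sigma$. A Büchi automaton (BA) is $\mathcal{A}=(Q,\delta,I,F)$ with finite state set $Q$, transition function $\delta:Q\times\Sigma\to 2^Q$, initial states $I$ and accepting states $F$; it is complete if $\delta(q,a)\neq\emptyset$ for all $q,a$. We write $\delta(P,a)=\bigcup_{p\in P}\delta(p,a)$. A run from $q$ on an infinite word $\alpha=\alpha_0\alpha_1\cdots$ is a sequence $\rho_0\rho_1\cdots$ with $\rho_0=q$ and $\rho_{i+1}\in\delta(\rho_i,\alpha_i)$; it is accepting if some state of $F$ occurs infinitely often. $\mathcal{L}(\mathcal{A})$ is the set of infinite words having an accepting run from some initial state. Delayed simulation: in the simulation game from $(p_0,r_0)$, in round $i$ Spoiler picks a transition $p_i\xrightarrow{\alpha_i}p_{i+1}$ and Duplicator answers with $r_i\xrightarrow{\alpha_i}r_{i+1}$ on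 the same symbol; a Duplicator strategy is a map $\sigma$ with $\sigma(r,p\xrightarrow{a}p')\in\delta(r,a)$ (no lookahead). Duplicator wins the delayed game if for all $i$, $p_i\in F$ implies $r_k\in F$ for some $k\ge i$. The (maximal) delayed simulation $\preceq_{\mathit{de}}$ is given by $p\preceq_{\mathit{de}}r$ iff Duplicator has a winning strategy from $(p,r)$. Schewe's construction. A ranking is $f:Q\to\{0,1,\dots,2n\}$ with $f(q)$ even for $q\in F$; $\mathrm{rank}(f)=\max_q f(q)$. For $S\subseteq Q$, $f$ is $S$-tight if (i) $\mathrm{rank}(f)=r$ is odd, (ii) $\{f(s)\mid s\in S\}\supseteq\{1,3,\dots,r\}$, (iii) $\{f(q)\mid q\notin S\}=\{0\}$; $\mathcal{T}$ is the set of $Q$-tight rankings. $\mathcal{B}_S=(Q',\delta',I',F')$: $Q'=Q_1\cup Q_2$, $Q_1=2^Q$, $Q_2=\{(S,O,f,i)\in 2^Q\times2^Q\times\mathcal{T}\times\{0,2,\dots,2n-2\}\mid f \text{ is } S\text{-tight},\ O\subseteq S\cap f^{-1}(i)\}$; $I'=\{I\}$; $\delta'=\delta_1\cup\delta_2\cup\delta_3$ with $\delta_1(S,a)=\{\delta(S,a)\}$; $\delta_2(S,a)=\{(S',\emptyset,f,0)\in Q_2\mid S'=\delta(S,a), f \text{ is } S'\text{-tight}\}$; and $(S',O',f',i')\in\delta_3((S,O,f,i),a)$ iff $(S',O',f',i')\in Q_2$, $S'=\delta(S,a)$, $f'(q')\le f(q)$ for all $q\in S$, $q'\in\delta(q,a)$,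 $\mathrm{rank}(f)=\mathrm{rank}(f')$, $f'$ is $S'$-tight, and either ($O=\emptyset$, $i'=(i+2)\bmod(\mathrm{rank}(f')+1)$, $O'=f'^{-1}(i')$) or ($O\ne\emptyset$, $i'=i$, $O'=\delta(O,a)\cap f'^{-1}(i)$); $F'=\{\emptyset\}\cup\{(S,\emptyset,f,i)\in Q_2\}$. *)

(* Defs.v *)
From mathcomp Require Import all_boot.
Set Implicit Arguments. Unset Strict Implicit. Unset Printing Implicit Defensive.

Record BA (Q Sigma : finType) := mkBA {
  delta : Q -> Sigma -> {set Q};
  init  : {set Q};
  acc   : {set Q} }.

Section Schewe.
Variables (Q Sigma : finType) (A : BA Q Sigma).

Definition complete : Prop := forall q a, delta A q a != set0.

Definition delta_set (P : {set Q}) (a : Sigma) : {set Q} :=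
  \bigcup_(p in P) delta A p a.

Fixpoint dup_play (sigma : Q -> Q -> Sigma -> Q -> Q) (r0 : Q)
   (ps : nat -> Q) (al : nat -> Sigma) (i : nat) : Q :=
  match i with
  | 0 => r0
  | j.+1 => sigma (dup_play sigma r0 ps al j) (ps j) (al j) (ps j.+1)
  end.

(* sigma r p a p' is Duplicator's answer from r to Spoiler's move p -a-> p' *)
Definition dup_strategy (sigma : Q -> Q -> Sigma -> Q -> Q) : Prop :=
  forall r p a p', p' \in delta A p a -> sigma r p a p' \in delta A r a.

Definition delayed_sim (p r : Q) : Prop :=
  exists sigma, dup_strategy sigma /\
    forall (ps : nat -> Q) (al : nat -> Sigma),
      ps 0 = p -> (forall i, ps i.+1 \in delta A (ps i) (al i)) ->
      forall i, ps i \in acc A ->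
        exists2 k, i <= k & dup_play sigma r ps al k \in acc A.

Definition n := #|Q|.

Definition is_ranking (f : {ffun Q -> nat}) : Prop :=
  (forall q, f q <= 2 * n) /\ (forall q, q \in acc A -> ~~ odd (f q)).

Definition rank (f : {ffun Q -> nat}) : nat := \max_(q : Q) f q.

Definition tight (S : {set Q}) (f : {ffun Q -> nat}) : Prop :=
  [/\ odd (rank f),
      (forall k, odd k -> k <= rank f -> exists2 s, s \in S & f s = k) &
      (forall q, q \notin S -> f q = 0)].

Definition inQ2 (S O : {set Q}) (f : {ffun Q -> nat}) (i : nat) : Prop :=
  [/\ is_ranking f, tight setT f, tight S f,
      ~~ odd i /\ i < 2 * n &
      O \subset S :&: [set q | f q == i]].

Definition ceil_even (x : nat) : nat := x + odd x.

Definition inQ2de (S O : {set Q}) (f : {ffun Q -> nat}) (i : nat) : Prop :=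
  inQ2 S O f i /\
  ~ (exists p q, [/\ p \in S, q \in S, delayed_sim p q & ceil_even (f q) < f p]).

Inductive cstate :=
  | Q1st of {set Q}
  | Q2st of {set Q} & {set Q} & {ffun Q -> nat} & nat.

Variable P : {set Q} -> {set Q} -> {ffun Q -> nat} -> nat -> Prop.

Definition ctrans (s : cstate) (a : Sigma) (s' : cstate) : Prop :=
  match s, s' with
  | Q1st T1, Q1st T2 => T2 = delta_set T1 a
  | Q1st T1, Q2st T2 U2 f' i' =>
      [/\ P T2 U2 f' i', T2 = delta_set T1 a, U2 = set0, i' = 0 & tight T2 f']
  | Q2st T1 U1 f i, Q2st T2 U2 f' i' =>
      [/\ P T2 U2 f' i' /\ T2 = delta_set T1 a,
          (forall q q', q \in T1 -> q' \in delta A q a -> f' q' <= f q),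
          rank f = rank f', tight T2 f' &
          ((U1 = set0 /\ i' = (i + 2) %% (rank f' + 1) /\
             U2 = T2 :&: [set q | f' q == i'])
          \/ (U1 != set0 /\ i' = i /\ U2 = delta_set U1 a :&: [set q | f' q == i]))]
  | Q2st _ _ _ _, Q1st _ => False
  end.

Definition caccepting (s : cstate) : Prop :=
  match s with
  | Q1st T1 => T1 = set0
  | Q2st T1 U1 f i => P T1 U1 f i /\ U1 = set0
  end.

Definition clang (w : nat -> Sigma) : Prop :=
  exists r : nat -> cstate,
    [/\ r 0 = Q1st (init A),
        (forall i, ctrans (r i) (w i) (r i.+1)) &
        (forall N, exists2 k, N <= k & caccepting (r k))].

End Schewe.

Definition lang_BS (Q Sigma : finType) (A : BA Q Sigma) : (nat -> Sigma) -> Prop :=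
  clang A (@inQ2 Q Sigma A).
Definition lang_BSde (Q Sigma : finType) (A : BA Q Sigma) : (nat -> Sigma) -> Prop :=
  clang A (@inQ2de Q Sigma A).

(* Main.v *)
Require Import Defs.
From mathcomp Require Import all_boot zify.
From Stdlib Require Import Classical ClassicalEpsilon ClassicalDescription.
Set Implicit Arguments. Unset Strict Implicit. Unset Printing Implicit Defensive.



Section Canon.
Variables (Q Sigma : finType) (A : BA Q Sigma) (w : nat -> Sigma).

Local Notation dl := (delta A).
Local Notation F := (acc A).

Definition fpth (H : Q -> nat -> Prop) (j L : nat) (ps : nat -> Q) :=
  (forall t, j <= t -> t < L -> ps t.+1 \in dl (ps t) (w t)) /\
  (forall t, j <= t -> t <= L -> H (ps t) t).
Definition ipath (H : Q -> nat -> Prop) (j : nat) (ps : nat -> Q) :=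
  forall t, j <= t -> ps t.+1 \in dl (ps t) (w t) /\ H (ps t) t.
Definition finite_in H q j := exists L, forall ps, ps j = q -> ~ fpth H j L ps.
Definition Ffree_in H q j :=
  forall L ps, ps j = q -> j <= L -> fpth H j L ps -> ps L \notin F.

Fixpoint G (k : nat) : Q -> nat -> Prop :=
  match k with
  | 0 => fun _ _ => True
  | k'.+1 => fun q j => G k' q j /\
      (if odd k' then ~ Ffree_in (G k') q j else ~ finite_in (G k') q j)
  end.

Lemma fpth_le H j L L' ps : fpth H j L ps -> L' <= L -> fpth H j L' ps.
Proof.
move=> [h1 h2] le; split=> t jt tL; [apply: h1 | apply: h2] => //; lia.
Qed.

Lemma ipath_fpth H j ps L : ipath H j ps -> fpth H j L ps.
Proof. by move=> h; split=> t jt _; case: (h t jt). Qed.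

Lemma ipath_later H j j' ps : j <= j' -> ipath H j ps -> ipath H j' ps.
Proof. move=> le h t jt; apply: h; lia. Qed.

Lemma notfinite H q j : ~ finite_in H q j ->
  forall L, exists ps, ps j = q /\ fpth H j L ps.
Proof.
move=> nf L; apply: NNPP => hn; apply: nf; exists L => ps e fp; apply: hn; by exists ps.
Qed.

Lemma allpaths_notfinite H q j :
  (forall L, exists ps, ps j = q /\ fpth H j L ps) -> ~ finite_in H q j.
Proof. move=> h [L hL]; case: (h L) => ps [e fp]; exact: hL e fp. Qed.

Lemma ipath_notfinite H q j ps : ps j = q -> ipath H j ps -> ~ finite_in H q j.
Proof. move=> e ip; apply: allpaths_notfinite => L; exists ps; split => //; exact: ipath_fpth. Qed.

Definition good H q j := forall L, exists ps, ps j = q /\ fpth H j L ps.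

Lemma good_H H q j : good H q j -> H q j.
Proof. move=> g; case: (g j) => ps [e [_ h2]]; rewrite -e; exact: h2. Qed.

Lemma good_next H q j : good H q j -> exists q', q' \in dl q (w j) /\ good H q' j.+1.
Proof.
move=> g; apply: NNPP => hn.
have hq : forall q', exists L, q' \in dl q (w j) ->
    forall ps, ps j.+1 = q' -> ~ fpth H j.+1 L ps.
  move=> q'; apply: NNPP => hn2; apply: hn; exists q'.
  have hin : q' \in dl q (w j).
    apply: NNPP => nin; apply: hn2; exists 0 => h; by [].
  split=> // L; apply: NNPP => hn3; apply: hn2; exists L => _ ps e fp; apply: hn3; by exists ps.
pose Lf q' := proj1_sig (constructive_indefinite_description _ (hq q')).
have hLf q' : q' \in dl q (w j) -> forall ps, ps j.+1 = q' -> ~ fpth H j.+1 (Lf q') ps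
  := proj2_sig (constructive_indefinite_description _ (hq q')).
case: (g (j.+1 + \max_(q' : Q) Lf q')) => ps [e [h1 h2]].
have hm : Lf (ps j.+1) <= \max_(q' : Q) Lf q' := leq_bigmax _.
have s1 : ps j.+1 \in dl q (w j) by rewrite -e; apply: h1 => //; lia.
apply: (hLf (ps j.+1) s1 ps erefl); split => t jt tL; [apply: h1 | apply: h2]; lia.
Qed.

Lemma konig H q j : ~ finite_in H q j -> exists ps, ps j = q /\ ipath H j ps.
Proof.
move=> nf; have g0 : good H q j by move=> L; apply: notfinite.
have hx : forall (x : Q * nat), exists y : Q,
    good H x.1 x.2 -> y \in dl x.1 (w x.2) /\ good H y x.2.+1.
  move=> [x t] /=; case: (classic (good H x t)) => gx.
  - by case: (good_next gx) => y hy; exists y.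
  - by exists x.
pose nx x := proj1_sig (constructive_indefinite_description _ (hx x)).
have hnx x : good H x.1 x.2 -> nx x \in dl x.1 (w x.2) /\ good H (nx x) x.2.+1
  := proj2_sig (constructive_indefinite_description _ (hx x)).
pose ps := fix itp t := match t with 0 => q | t'.+1 => if t' < j then q else nx (itp t', t') end.
have psq t : t <= j -> ps t = q.
  by case: t => [//|t] /= le; rewrite ifT //.
have psS t : j <= t -> ps t.+1 = nx (ps t, t).
  by move=> le /=; rewrite ifF //; apply/negbTE; rewrite -leqNgt.
have gd t : j <= t -> good H (ps t) t.
  elim: t => [|t IH] le.
  - have e : j = 0 by lia.
    by rewrite psq ?e // -e.
  case: (leqP j t) => jt.
  - by rewrite psS //; case: (hnx (ps t, t) (IH jt)).
  - have e : j = t.+1 by lia.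
    by rewrite psq ?e // -e.
exists ps; split; first exact: psq.
move=> t jt; split; last exact: good_H (gd t jt).
by rewrite psS //; case: (hnx (ps t, t) (gd t jt)).
Qed.


Lemma G_le k l q j : k <= l -> G l q j -> G k q j.
Proof.
move=> le; elim: l le => [|l IH] le; first by have -> : k = 0 by lia.
case: (leqP k l) => kl; first by move=> [h _]; exact: IH.
by have -> : k = l.+1 by lia.
Qed.

Lemma fpth_cons H q j L ps : H q j -> ps j.+1 \in dl q (w j) ->
  fpth H j.+1 L ps -> fpth H j L (fun t => if t == j then q else ps t).
Proof.
move=> hq hs [h1 h2]; split=> t jt tL.
- case: (eqVneq t j) => [->|ne]; first by rewrite ifF //; apply/negbTE; rewrite neq_ltn ltnSn orbT.
  rewrite ifF; last by apply/negbTE; rewrite neq_ltn; apply/orP; right; lia.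
  apply: h1; lia.
- case: (eqVneq t j) => [->//|ne]; apply: h2; lia.
Qed.

Lemma cat_ipath H j L ps qs : j <= L -> fpth H j L ps -> ipath H L qs -> qs L = ps L ->
  ipath H j (fun t => if t <= L then ps t else qs t).
Proof.
move=> jL [h1 h2] iq e t jt /=; case: (ltnP t L) => tL.
- have E1 : (t <= L) = true by lia. have E2 : (t.+1 <= L) = true by lia.
  rewrite ?E1 ?E2. split; [apply: h1|apply: h2]; lia.
- case: (eqVneq t L) => [->|ne].
  + have E2 : (L.+1 <= L) = false by lia. rewrite leqnn ?E2 -e; exact: iq.
  + have E1 : (t <= L) = false by lia. have E2 : (t.+1 <= L) = false by lia.
    rewrite ?E1 ?E2; apply: iq; lia.
Qed.

Lemma cat_fpth H j L M ps qs : j <= L -> fpth H j L ps -> fpth H L M qs -> qs L = ps L ->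
  fpth H j M (fun t => if t <= L then ps t else qs t).
Proof.
move=> jL [h1 h2] [g1 g2] e; split=> t jt tM /=; case: (ltnP t L) => tL.
- have E1 : (t <= L) = true by lia. have E2 : (t.+1 <= L) = true by lia.
  rewrite ?E1 ?E2. apply: h1; lia.
- case: (eqVneq t L) => [->|ne].
  + have E2 : (L.+1 <= L) = false by lia. rewrite leqnn ?E2 -e; apply: g1; lia.
  + have E1 : (t <= L) = false by lia. have E2 : (t.+1 <= L) = false by lia.
    rewrite ?E1 ?E2; apply: g1; lia.
- have E1 : (t <= L) = true by lia. rewrite E1; apply: h2; lia.
- case: (eqVneq t L) => [->|ne]; first by rewrite leqnn; apply: h2.
  have E1 : (t <= L) = false by lia. rewrite E1; apply: g2; lia.
Qed.

Lemma G_odd_ipath k q j : odd k -> G k q j -> exists ps, ps j = q /\ ipath (G k) j ps.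
Proof.
case: k => [//|k] /= ok [Gk X]; rewrite (negbTE ok) in X.
case: (konig X) => ps [e ip]; exists ps; split => // t jt.
case: (ip t jt) => s hG; split => //=; split => //.
rewrite (negbTE ok); apply: (ipath_notfinite (ps := ps)) => //.
exact: ipath_later ip.
Qed.

Lemma Ffree_later H q j L ps : Ffree_in H q j -> ps j = q -> j <= L -> fpth H j L ps ->
  Ffree_in H (ps L) L.
Proof.
move=> ff e jL fp M qs eq LM fq.
have := ff M _ _ (leq_trans jL LM) (cat_fpth jL fp fq eq).
rewrite /= jL e => /(_ erefl).
case: (ltnP L M) => lm //.
have EM : M = L by lia. by rewrite EM eq.
Qed.

Lemma G_pred k q q' j : q' \in dl q (w j) -> G k q' j.+1 -> G k q j.
Proof.
move=> hs; elim: k q' hs => [//|k IH] q' hs /= [Gk X]; split; first exact: IH Gk.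
have Gq := IH _ hs Gk.
case: ifP X => ok X.
- move=> ff; apply: X => L ps e jL fp.
  have := ff L (fun t => if t == j then q else ps t) _ _ (fpth_cons Gq _ fp).
  rewrite eqxx ifF; last by apply/negbTE; rewrite neq_ltn; apply/orP; right; lia.
  apply => //; [lia | by rewrite e].
- apply: allpaths_notfinite => L.
  case: (notfinite X (maxn L j.+1)) => ps [e fp].
  exists (fun t => if t == j then q else ps t); split; first by rewrite eqxx.
  apply: (fpth_le (L := maxn L j.+1)); last by rewrite leq_maxl.
  apply: fpth_cons => //; by rewrite e.
Qed.

Definition win (sigma : Q -> Q -> Sigma -> Q -> Q) p r :=
  forall (ps : nat -> Q) (al : nat -> Sigma), ps 0 = p ->
  (forall i, ps i.+1 \in dl (ps i) (al i)) ->
  forall i, ps i \in F -> exists2 k, i <= k & dup_play sigma r ps al k \in F.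

Lemma dup_cons (sigma : Q -> Q -> Sigma -> Q -> Q) r p a ps al k :
  dup_play sigma r (fun t => if t is t'.+1 then ps t' else p)
     (fun t => if t is t'.+1 then al t' else a) k.+1
  = dup_play sigma (sigma r p a (ps 0)) ps al k.
Proof.
elim: k => [|k IH] //.
have E : forall r0 ps0 al0 m, dup_play sigma r0 ps0 al0 m.+1
   = sigma (dup_play sigma r0 ps0 al0 m) (ps0 m) (al0 m) (ps0 m.+1) by [].
by rewrite E IH.
Qed.

Lemma win_shift sigma p r a p' : win sigma p r -> p' \in dl p a ->
  win sigma p' (sigma r p a p').
Proof.
move=> W hp ps al e0 hs i hi.
have := W (fun t => if t is t'.+1 then ps t' else p) (fun t => if t is t'.+1 then al t' else a)
  erefl _ i.+1 hi.
case.
- by case => [|i'] //=; rewrite e0.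
- move=> [|k] // ik; rewrite dup_cons e0 => hk; by exists k.
Qed.

Lemma sim_path sigma p q j ps : dup_strategy A sigma -> win sigma p q -> ps j = p ->
  (forall t, j <= t -> ps t.+1 \in dl (ps t) (w t)) ->
  exists qs, [/\ qs j = q, (forall t, j <= t -> qs t.+1 \in dl (qs t) (w t)),
     (forall t, j <= t -> win sigma (ps t) (qs t)) &
     (forall t, j <= t -> ps t \in F -> exists2 m, t <= m & qs m \in F)].
Proof.
move=> ds W e hs.
pose ps' i := ps (j + i). pose al i := w (j + i).
have hs' i : ps' i.+1 \in dl (ps' i) (al i) by rewrite /ps' /al addnS; apply: hs; lia.
pose dp := dup_play sigma q ps' al.
have wd d : win sigma (ps' d) (dp d).
  elim: d => [|d IH]; first by rewrite /ps' addn0 e.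
  exact: win_shift IH (hs' d).
exists (fun t => dp (t - j)); split.
- by rewrite subnn.
- move=> t jt; rewrite subSn //.
  have E : w t = al (t - j) by rewrite /al subnKC.
  rewrite E; exact: ds _ _ _ _ (hs' (t-j)).
- move=> t jt; have := wd (t - j); by rewrite /ps' subnKC.
- move=> t jt pF.
  have h0 : ps' 0 = p by rewrite /ps' addn0.
  have h1 : ps' (t - j) \in F by rewrite /ps' subnKC.
  have [k tk hk] := W ps' al h0 hs' (t - j) h1.
  exists (j + k); first lia. by rewrite addKn.
Qed.

Lemma sim_G sigma : dup_strategy A sigma ->
  forall k j p q, win sigma p q -> G k p j -> G k q j.
Proof.
move=> ds; elim=> [//|k IH] j p q W /= [Gp X]; split; first exact: IH W Gp.
case: ifP X => ok X.
- move=> ff; apply: X => L ps e jL fp; apply/negP => pF.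
  have GL : G k (ps L) L by case: fp => _ h2; apply: h2.
  have [qs0 [e0 ip0]] := G_odd_ipath ok GL.
  have ip := cat_ipath jL fp ip0 e0.
  have ej : (fun t => if t <= L then ps t else qs0 t) j = p by rewrite /= jL.
  have [qs [eq hq wq fq]] := sim_path ds W ej (fun t jt => proj1 (ip t jt)).
  have pL : (fun t => if t <= L then ps t else qs0 t) L \in F by rewrite /= leqnn.
  have [m Lm qm] := fq L jL pL.
  suff hfp : fpth (G k) j m qs by have := ff m qs eq (leq_trans jL Lm) hfp; rewrite qm.
  split; first by move=> t jt _; apply: hq.
  move=> t jt _; apply: (IH t _ _ (wq t jt)); exact: proj2 (ip t jt).
- have [ps [e ip]] := konig X.
  have [qs [eq hq wq _]] := sim_path ds W e (fun t jt => proj1 (ip t jt)).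
  apply: (ipath_notfinite eq) => t jt; split; first exact: hq.
  apply: (IH t _ _ (wq t jt)); exact: proj2 (ip t jt).
Qed.

Lemma delayed_G k j p q : delayed_sim A p q -> G k p j -> G k q j.
Proof. move=> [sigma [ds W]]; exact: sim_G ds k j p q W. Qed.

End Canon.


Lemma mono_le (f : nat -> nat) a : (forall j, a <= j -> f j.+1 <= f j) ->
  forall j, a <= j -> f j <= f a.
Proof.
move=> hm; elim=> [|j IH] aj; first by (have E : a = 0 by lia); rewrite E.
case: (leqP a j) => h; first exact: leq_trans (hm j h) (IH h).
by (have E : a = j.+1 by lia); rewrite E.
Qed.

Lemma evconst (f : nat -> nat) a : (forall j, a <= j -> f j.+1 <= f j) ->
  exists2 T, a <= T & forall j, T <= j -> f j = f T.
Proof.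
move=> hm.
suff : forall v b, a <= b -> f b <= v -> exists2 T, b <= T & forall j, T <= j -> f j = f T.
  move=> h; case: (h (f a) a (leqnn a) (leqnn _)) => T aT hT; by exists T.
elim=> [|v IH] b ab fb.
- exists b => // j bj; have := mono_le (a := b) (fun j bj => hm j (leq_trans ab bj)) bj; lia.
- case: (classic (forall j, b <= j -> f j = f b)) => h; first by exists b.
  have [j [bj nj]] : exists j, b <= j /\ f j <> f b.
    apply: NNPP => nn; apply: h => j bj; apply: NNPP => ne; apply: nn; by exists j.
  have := mono_le (a := b) (fun j bj => hm j (leq_trans ab bj)) bj => le.
  case: (IH j (leq_trans ab bj)) => [|T jT hT]; first lia.
  exists T => //; lia.
Qed.



Section Run.
Variables (Q Sigma : finType) (A : BA Q Sigma) (w : nat -> Sigma).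
Local Notation dl := (delta A).
Local Notation F := (acc A).

Fixpoint Sx j := match j with 0 => init A | j'.+1 => delta_set A (Sx j') (w j') end.

Definition sof (s : cstate Q) := match s with Q1st X => X | Q2st X _ _ _ => X end.
Definition oof (s : cstate Q) := match s with Q1st _ => set0 | Q2st _ U _ _ => U end.
Definition fof (s : cstate Q) := match s with Q1st _ => [ffun=> 0] | Q2st _ _ f _ => f end.
Definition iof (s : cstate Q) := match s with Q1st _ => 0 | Q2st _ _ _ i => i end.
Definition isQ2 (s : cstate Q) := match s with Q1st _ => false | Q2st _ _ _ _ => true end.

Lemma Sx_step q q' t : q \in Sx t -> q' \in dl q (w t) -> q' \in Sx t.+1.
Proof. by move=> hq hq'; apply/bigcupP; exists q. Qed.

Lemma Sx_pred q' t : q' \in Sx t.+1 -> exists q, q \in Sx t /\ q' \in dl q (w t).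
Proof. by case/bigcupP => q hq hq'; exists q. Qed.

Lemma Sx_path j L ps : ps j \in Sx j -> (forall t, j <= t -> t < L -> ps t.+1 \in dl (ps t) (w t)) ->
  forall t, j <= t -> t <= L -> ps t \in Sx t.
Proof.
move=> h0 hs t jt; elim: t jt => [|t IH] jt tL; first by (have E : j = 0 by lia); rewrite -E.
case: (leqP j t) => jt'.
- apply: (Sx_step (IH jt' _)); [lia | apply: hs; lia].
- by (have E : j = t.+1 by lia); rewrite -E.
Qed.

Variable r : nat -> cstate Q.
Hypothesis r0 : r 0 = Q1st (init A).
Hypothesis rstep : forall i, ctrans A (@inQ2 Q Sigma A) (r i) (w i) (r i.+1).
Hypothesis racc : forall N, exists2 k, N <= k & caccepting (@inQ2 Q Sigma A) (r k).

Lemma sof_r j : sof (r j) = Sx j.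
Proof.
elim: j => [|j IH]; first by rewrite r0.
have := rstep j; case: (r j) IH => [S1|S1 O1 f1 i1] /= ->; case: (r j.+1) => //=.
- by move=> S2 O2 f2 i2 [].
- by move=> S2 O2 f2 i2 [[]].
Qed.

Lemma isQ2_stay j : isQ2 (r j) -> isQ2 (r j.+1).
Proof. by have := rstep j; case: (r j) => //= ? ? ? ?; case: (r j.+1). Qed.

Variable j0 : nat.
Hypothesis hj0 : isQ2 (r j0).

Lemma isQ2_after j : j0 <= j -> isQ2 (r j).
Proof.
elim: j => [|j IH] le; first by (have E : j0 = 0 by lia); rewrite -E.
case: (leqP j0 j) => h; first exact: isQ2_stay (IH h).
by (have E : j0 = j.+1 by lia); rewrite -E.
Qed.

Local Notation Of j := (oof (r j)).
Local Notation ff j := (fof (r j)).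
Local Notation ii j := (iof (r j)).

Lemma rQ2 j : j0 <= j -> r j = Q2st (Sx j) (Of j) (ff j) (ii j).
Proof. move=> /isQ2_after; rewrite -sof_r; by case: (r j). Qed.

Lemma j0_pos : 0 < j0.
Proof. by case: j0 hj0 => [|//]; rewrite r0. Qed.

Lemma RF1 j : j0 <= j -> inQ2 A (Sx j) (Of j) (ff j) (ii j).
Proof.
case: j => [|j] le; first by have := j0_pos; lia.
have := rstep j; rewrite (rQ2 le) /=; case: (r j) => [S1|S1 O1 f1 i1] /=.
- by case.
- by case=> [[]].
Qed.

Lemma RF_step j : j0 <= j ->
  [/\ (forall q q', q \in Sx j -> q' \in dl q (w j) -> ff j.+1 q' <= ff j q),
      rank (ff j) = rank (ff j.+1) &
      ((Of j = set0 /\ ii j.+1 = (ii j + 2) %% (rank (ff j.+1) + 1) /\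
             Of j.+1 = Sx j.+1 :&: [set q | ff j.+1 q == ii j.+1])
          \/ (Of j != set0 /\ ii j.+1 = ii j /\
             Of j.+1 = delta_set A (Of j) (w j) :&: [set q | ff j.+1 q == ii j]))].
Proof.
move=> le; have le' : j0 <= j.+1 by lia.
have := rstep j; rewrite (rQ2 le) (rQ2 le') /=.
by case=> _ h1 h2 _ h3; split.
Qed.

Lemma RF5 N : exists2 k, N <= k & Of k = set0.
Proof.
case: (racc (maxn N j0)) => k le; rewrite (rQ2 (leq_trans (leq_maxr _ _) le)) /= => [[_ e]].
exists k => //; exact: leq_trans (leq_maxl _ _) le.
Qed.

Definition R := rank (ff j0).

Lemma rank_const j : j0 <= j -> rank (ff j) = R.
Proof.
elim: j => [|j IH] le; first by (have E : j0 = 0 by lia); rewrite /R -E.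
case: (leqP j0 j) => h; last by (have E : j0 = j.+1 by lia); rewrite /R E.
by case: (RF_step h) => _ <- _; apply: IH.
Qed.

Lemma R_odd : odd R.
Proof. by case: (RF1 (leqnn j0)) => _ _ [ho _ _]. Qed.

Lemma ff_le_R j q : ff j q <= rank (ff j).
Proof. exact: leq_bigmax. Qed.

Lemma next_empty u : exists u', [/\ u < u', Of u' = set0 &
   forall t, u < t -> t < u' -> Of t != set0].
Proof.
have ex : exists t, (u < t) && (Of t == set0).
  case: (RF5 u.+1) => t h e; exists t; by rewrite h e eqxx.
case: (ex_minnP ex) => u' /andP[h1 /eqP h2] hmin.
exists u'; split => // t ut tu; apply/negP => /eqP e.
have := hmin t; rewrite ut e eqxx => /(_ erefl); lia.
Qed.

Lemma ii_const u u' : j0 <= u -> (forall t, u < t -> t < u' -> Of t != set0) ->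
  forall t, u < t -> t <= u' -> ii t = ii u.+1.
Proof.
move=> ju hne; elim=> [//|t IH] ut tu.
case: (leqP t u) => h; first by (have E : t = u by lia); rewrite E.
rewrite -IH //; last lia.
case: (RF_step (j := t) _); first lia.
move=> _ _ [[e _]|[_ [e _]]] //.
have htu : t < u' by lia.
have := hne t h htu. by rewrite e eqxx.
Qed.

Lemma ii_even j : j0 <= j -> ~~ odd (ii j).
Proof. by case/RF1 => _ _ _ []. Qed.

Lemma cyc u0 : j0 <= u0 -> Of u0 = set0 ->
  forall s, exists u, [/\ u0 <= u, Of u = set0 & ii u.+1 = (ii u0.+1 + 2 * s) %% (R + 1)].
Proof.
move=> ju0 e0; elim=> [|s [u [uu eu iu]]].
- exists u0; split => //; rewrite addn0 modn_small //.
  case: (RF_step ju0) => _ _ [[_ [-> _]]|[h _]]; last by rewrite e0 eqxx in h.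
  by rewrite (rank_const (j := u0.+1)) ?ltn_pmod //; lia.
- case: (next_empty u) => u' [h1 h2 h3].
  have hc := ii_const (leq_trans ju0 uu) h3.
  exists u'; split => //; first lia.
  case: (RF_step (j := u') _); first lia.
  move=> _ _ [[_ [-> _]]|[h _]]; last by rewrite h2 eqxx in h.
  rewrite (rank_const (j := u'.+1)); last lia.
  rewrite hc // iu modnDml; congr (_ %% _); lia.
Qed.

Lemma BP1 j ps c : j0 <= j -> ps j \in Sx j ->
  (forall t, j <= t -> ps t.+1 \in dl (ps t) (w t)) -> ~~ odd c ->
  (forall t, j <= t -> ff t (ps t) = c) -> False.
Proof.
move=> jj pj hs ec hc.
have psx t : j <= t -> ps t \in Sx t.
  move=> jt.
  have hs' : forall t', j <= t' -> t' < t -> ps t'.+1 \in dl (ps t') (w t') by move=> t' jt' _; exact: hs.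
  exact: (Sx_path pj hs' jt (leqnn t)).
case: (RF5 j) => u0 ju0 e0.
have ju0' : j0 <= u0 by lia.
have xlt : ii u0.+1 < R + 1.
  case: (RF_step ju0') => _ _ [[_ [-> _]]|[h _]]; last by rewrite e0 eqxx in h.
  rewrite (rank_const (j := u0.+1)) ?ltn_pmod //; lia.
have xev : ~~ odd (ii u0.+1).
  case: (RF_step ju0') => _ _ [[_ [-> _]]|[h _]]; last by rewrite e0 eqxx in h.
  rewrite (rank_const (j := u0.+1)); last lia.
  rewrite odd_mod; last by rewrite addn1 /= R_odd.
  by rewrite oddD /= addbF ii_even.
have cle : c <= R by rewrite -(hc j (leqnn j)) -(rank_const jj); exact: ff_le_R.
have Rodd := R_odd.
have ex : exists s, ii u0.+1 + 2 * s = R + 1 + c.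
  have hx := odd_double_half (ii u0.+1); have hcc := odd_double_half c; have hR := odd_double_half R.
  rewrite (negbTE xev) in hx; rewrite (negbTE ec) in hcc; rewrite Rodd in hR.
  rewrite -!muln2 /= in hx hcc hR.
  exists (R./2 + 1 + c./2 - (ii u0.+1)./2); lia.
case: ex => s es.
case: (cyc ju0' e0 s) => u [uu eu iu].
rewrite es modnDl modn_small in iu; last lia.
have inv t : u < t -> ps t \in Of t /\ ii t = c.
  elim: t => [//|t IH] ut.
  case: (leqP t u) => h.
  - have E : t = u by lia.
    rewrite E in ut *; split => //.
    case: (RF_step (j := u) _); first lia.
    move=> _ _ [[_ [_ ->]]|[h' _]]; last by rewrite eu eqxx in h'.
    rewrite inE iu psx ?inE ?hc //; lia.
  - case: (IH h) => i1 i2.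
    case: (RF_step (j := t) _); first lia.
    move=> _ _ [[e _]|[_ [-> ->]]].
    + by rewrite e inE in i1.
    + split => //; rewrite inE [in X in _ && X]inE i2 hc; last lia.
      rewrite eqxx andbT.
      apply/bigcupP; exists (ps t) => //; apply: hs; lia.
case: (RF5 u.+1) => k uk ek.
have := inv k uk; by rewrite ek inE; case.
Qed.

Local Notation GG := (G A w).

Lemma ff_mono j L ps : j0 <= j -> ps j \in Sx j ->
  (forall t, j <= t -> t < L -> ps t.+1 \in dl (ps t) (w t)) ->
  forall t, j <= t -> t <= L -> ff t (ps t) <= ff j (ps j).
Proof.
move=> jj pj hs t jt; elim: t jt => [|t IH] jt tL; first by (have E : j = 0 by lia); rewrite E.
case: (leqP j t) => jt'.
- apply: leq_trans (IH jt' _); last lia.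
  case: (RF_step (j := t) _); first lia.
  move=> h _ _; apply: h; last by apply: hs; lia.
  exact: (Sx_path pj hs jt' (ltnW tL)).
- by (have E : j = t.+1 by lia); rewrite E.
Qed.

Lemma bound_G k j q : j0 <= j -> q \in Sx j -> ff j q < k -> ~ GG k q j.
Proof.
elim: k j q => [//|k IH] j q jj hq lt [Gk X].
case: (ltnP (ff j q) k) => hk; first exact: IH jj hq hk Gk.
have ek : ff j q = k by lia.
move: X; case: ifP => ok X.
- apply: X => L ps e jL [h1 h2]; apply/negP => pF.
  have pj : ps j \in Sx j by rewrite e.
  have hL : ps L \in Sx L := Sx_path pj h1 jL (leqnn L).
  have m1 : ff L (ps L) <= k by rewrite -ek -e; exact: (ff_mono jj pj h1 jL (leqnn L)).
  have m2 : ~ ff L (ps L) < k.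
    move=> lt'; apply: (IH L (ps L)) lt' _ => //; [lia | exact: h2].
  have ekL : ff L (ps L) = k by lia.
  have jL0 : j0 <= L by lia.
  case: (RF1 jL0) => [[_ hev] _ _ _ _].
  by have := hev _ pF; rewrite ekL ok.
- have [ps [e ip]] := konig X.
  have hs : forall t, j <= t -> ps t.+1 \in dl (ps t) (w t) by move=> t jt; case: (ip t jt).
  apply: (BP1 (j := j) (ps := ps) (c := k)) => //; rewrite ?e ?ok //.
  move=> t jt.
  have hs' : forall t', j <= t' -> t' < t -> ps t'.+1 \in dl (ps t') (w t') by move=> t' jt' _; exact: hs.
  have pj : ps j \in Sx j by rewrite e.
  have m1 : ff t (ps t) <= k by rewrite -ek -e; exact: (ff_mono jj pj hs' jt (leqnn t)).
  have ht : ps t \in Sx t := Sx_path pj hs' jt (leqnn t).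
  have m2 : ~ ff t (ps t) < k.
    move=> lt'; apply: (IH t (ps t)) lt' _ => //; [lia | by case: (ip t jt)].
  lia.
Qed.

Definition Gb k q j : bool := if excluded_middle_informative (GG k q j) then true else false.
Lemma GbP k q j : Gb k q j = true <-> GG k q j.
Proof. by rewrite /Gb; case: excluded_middle_informative. Qed.

Definition rk q j := \max_(k < (2 * n Q).+1 | Gb k q j) k.

Lemma ff_le2n j q : j0 <= j -> ff j q <= 2 * n Q.
Proof. by case/RF1 => [[h _] _ _ _ _]. Qed.

Lemma rk_le2n q j : rk q j <= 2 * n Q.
Proof. by apply/bigmax_leqP => k _; rewrite -ltnS. Qed.

Lemma rk_spec k q j : j0 <= j -> q \in Sx j -> (GG k q j <-> k <= rk q j).
Proof.
move=> jj hq; have hb := ff_le2n q jj.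
have big : forall k', 2 * n Q < k' -> ~ GG k' q j.
  move=> k' lt g; apply: (bound_G (k := (ff j q).+1) jj hq (ltnSn _)).
  apply: G_le g; lia.
split.
- move=> g; case: (leqP k (2 * n Q)) => kl; last by case: (big k kl g).
  have kl' : k < (2 * n Q).+1 by lia.
  have := @leq_bigmax_cond _ (fun i : 'I_(2 * n Q).+1 => Gb i q j) (fun i => nat_of_ord i) (Ordinal kl').
  by apply; apply/GbP.
- move=> le; apply: NNPP => ng.
  have : rk q j < k.
    case: k le ng => [|k] le ng; first by case: ng.
    rewrite ltnS; apply/bigmax_leqP => i /GbP gi.
    case: (leqP i k) => // ki; case: ng; apply: G_le gi; lia.
  lia.
Qed.

Lemma rk_G q j : j0 <= j -> q \in Sx j -> GG (rk q j) q j.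
Proof. by move=> jj hq; apply/(rk_spec _ jj hq). Qed.

Lemma rk_nG q j : j0 <= j -> q \in Sx j -> ~ GG (rk q j).+1 q j.
Proof. by move=> jj hq /(rk_spec _ jj hq); rewrite ltnn. Qed.

Lemma rk_le_ff q j : j0 <= j -> q \in Sx j -> rk q j <= ff j q.
Proof.
move=> jj hq; case: (leqP (rk q j) (ff j q)) => // lt.
by case: (bound_G jj hq lt (rk_G jj hq)).
Qed.

Lemma rk_mono q q' j : j0 <= j -> q \in Sx j -> q' \in dl q (w j) -> rk q' j.+1 <= rk q j.
Proof.
move=> jj hq hs; have hq' := Sx_step hq hs.
apply/(rk_spec _ jj hq); apply: (G_pred hs); apply: rk_G => //; lia.
Qed.

Lemma rk_F q j : j0 <= j -> q \in Sx j -> q \in F -> ~~ odd (rk q j).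
Proof.
move=> jj hq qF; apply/negP => od; apply: (rk_nG jj hq) => /=; rewrite od; split; first exact: rk_G.
move=> ff'.
suff hfp : fpth A w (GG (rk q j)) j j (fun _ => q).
  by have := ff' j _ erefl (leqnn j) hfp; rewrite qF.
split => t jt tj; first lia.
have -> : t = j by lia. exact: rk_G.
Qed.

Lemma rk_sim p q j : j0 <= j -> p \in Sx j -> q \in Sx j -> delayed_sim A p q -> rk p j <= rk q j.
Proof. by move=> jj hp hq ds; apply/(rk_spec _ jj hq); apply: delayed_G ds _; apply: rk_G. Qed.

Lemma rk_even_finite q j : j0 <= j -> q \in Sx j -> ~~ odd (rk q j) -> finite_in A w (GG (rk q j)) q j.
Proof.
move=> jj hq ev; apply: NNPP => nf; apply: (rk_nG jj hq) => /=; rewrite (negbTE ev); split => //.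
exact: rk_G.
Qed.

Lemma rk_odd_Ffree q j : j0 <= j -> q \in Sx j -> odd (rk q j) -> Ffree_in A w (GG (rk q j)) q j.
Proof.
move=> jj hq od; apply: NNPP => nf; apply: (rk_nG jj hq) => /=; rewrite od; split => //.
exact: rk_G.
Qed.

Lemma fpth_snoc H j L ps q' : fpth A w H j L ps -> j <= L -> q' \in dl (ps L) (w L) ->
  H q' L.+1 -> fpth A w H j L.+1 (fun t => if t == L.+1 then q' else ps t).
Proof.
move=> [h1 h2] jL hs hq; split => t jt tL /=.
- case: (eqVneq t L) => [->|ne].
  + by rewrite eqxx ifF //; apply/negbTE; rewrite neq_ltn ltnSn.
  + rewrite !ifF; try (apply/negbTE; rewrite neq_ltn; apply/orP; left; lia).
    apply: h1; lia.
- case: (eqVneq t L.+1) => [->//|ne]; apply: h2; lia.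
Qed.

Lemma fpth_mono (H H' : Q -> nat -> Prop) j L ps :
  (forall t, j <= t -> t <= L -> H (ps t) t -> H' (ps t) t) ->
  fpth A w H j L ps -> fpth A w H' j L ps.
Proof. move=> hh [h1 h2]; split => // t jt tL; apply: hh => //; exact: h2. Qed.

Lemma FINC c N (X : {set Q}) : (forall q, q \in X -> finite_in A w (GG c) q N) ->
  (forall L, N <= L -> exists q ps, [/\ q \in X, ps N = q & fpth A w (GG c) N L ps]) -> False.
Proof.
move=> hf hp.
have hq : forall q, exists L, q \in X -> forall ps, ps N = q -> ~ fpth A w (GG c) N L ps.
  move=> q; case: (boolP (q \in X)) => qX; last by exists 0.
  by case: (hf q qX) => L hL; exists L.
pose Lf q := proj1_sig (constructive_indefinite_description _ (hq q)).
have hLf q : q \in X -> forall ps, ps N = q -> ~ fpth A w (GG c) N (Lf q) ps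
  := proj2_sig (constructive_indefinite_description _ (hq q)).
case: (hp (N + \max_(q : Q) Lf q)) => [|q [ps [qX e fp]]]; first lia.
apply: (hLf q qX ps e); apply: fpth_le fp _.
have : Lf q <= \max_(q : Q) Lf q := leq_bigmax _. lia.
Qed.

Definition mx j := \max_(q in Sx j) rk q j.

Lemma Sx_nonempty j : j0 <= j -> exists q, q \in Sx j.
Proof.
case/RF1 => _ _ [od ht _] _ _.
have r1 : 0 < rank (ff j) by move: od; case: (rank _).
by case: (ht 1 erefl r1) => s hs _; exists s.
Qed.

Lemma mx_att j : j0 <= j -> exists2 q, q \in Sx j & rk q j = mx j.
Proof.
move=> jj; case: (Sx_nonempty jj) => q0 hq0.
have : 0 < #|Sx j| by apply/card_gt0P; exists q0.
by case/(eq_bigmax_cond (fun q => rk q j)) => q hq e; exists q.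
Qed.

Lemma mx_ge q j : q \in Sx j -> rk q j <= mx j.
Proof. by move=> hq; apply: leq_bigmax_cond. Qed.

Lemma mx_mono j : j0 <= j -> mx j.+1 <= mx j.
Proof.
move=> jj; apply/bigmax_leqP => q' hq'.
case: (Sx_pred hq') => q [hq hs].
exact: leq_trans (rk_mono jj hq hs) (mx_ge hq).
Qed.

Lemma mx_le2n j : mx j <= 2 * n Q.
Proof. by apply/bigmax_leqP => q _; apply: rk_le2n. Qed.


Section Tight.
Variable T1 : nat.
Hypothesis hT1 : j0 <= T1.
Hypothesis hM : forall j, T1 <= j -> mx j = mx T1.
Local Notation M := (mx T1).

Lemma backtrack d q' : q' \in Sx (T1 + d) -> rk q' (T1 + d) = M ->
  exists ps, [/\ ps (T1 + d) = q', ps T1 \in Sx T1, rk (ps T1) T1 = M &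
     fpth A w (GG M) T1 (T1 + d) ps].
Proof.
elim: d q' => [|d IH] q' hq' hr.
- rewrite addn0 in hq' hr *; exists (fun _ => q'); split => //.
  split => t jt tj; first lia.
  have -> : t = T1 by lia. by apply/(rk_spec _ hT1 hq'); rewrite hr.
- rewrite addnS in hq' hr *.
  case: (Sx_pred hq') => q [hq hs].
  have jj : j0 <= T1 + d by lia.
  have r1 := rk_mono jj hq hs; have r2 := mx_ge hq; rewrite hM in r2; last lia.
  have rq : rk q (T1 + d) = M by lia.
  case: (IH q hq rq) => ps [e1 e2 e3 fp].
  exists (fun t => if t == (T1 + d).+1 then q' else ps t); split.
  + by rewrite eqxx.
  + rewrite ifF //; apply/negbTE; rewrite neq_ltn; apply/orP; left; lia.
  + rewrite ifF //; apply/negbTE; rewrite neq_ltn; apply/orP; left; lia.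
  + apply: fpth_snoc => //; [lia | by rewrite e1 | ].
    apply/(rk_spec _ _ hq'); [lia | by rewrite hr].
Qed.

Lemma M_odd : odd M.
Proof.
apply: NNPP => /negP ev.
apply: (FINC (c := M) (N := T1) (X := [set q in Sx T1 | rk q T1 == M])).
- move=> q; rewrite inE => /andP[hq /eqP e].
  rewrite -e; apply: rk_even_finite => //; by rewrite e.
- move=> L le.
  case: (mx_att (j := L) _) => [|q' hq' e]; first lia.
  rewrite hM // in e.
  have E : L = T1 + (L - T1) by lia.
  rewrite E in hq' e.
  case: (backtrack hq' e) => ps [e1 e2 e3 fp].
  exists (ps T1), ps; split => //; first by rewrite inE e2 e3 eqxx.
  by rewrite E.
Qed.

Lemma exists_rank k : odd k -> k < M ->
  exists j1 q, [/\ j0 <= j1, q \in Sx j1 & rk q j1 = k].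
Proof.
move=> ok kM; apply: NNPP => H0.
have nk : forall j q, j0 <= j -> q \in Sx j -> rk q j <> k.
  move=> j q jj hq e; apply: H0; by exists j, q.
have cl : forall d j q, j0 <= j -> q \in Sx j -> GG k q j -> GG (k + d) q j.
  elim=> [|d IH] j q jj hq g; first by rewrite addn0.
  have gd := IH j q jj hq g.
  rewrite addnS /=; split => //.
  have rkk : k <= rk q j by apply/(rk_spec _ jj hq).
  have rk1 : k.+1 <= rk q j by have := nk j q jj hq; lia.
  have g1 : GG k.+1 q j by apply/(rk_spec _ jj hq).
  case: g1 => _; rewrite ok => nf.
  case: ifP => _.
  + move=> ff'; apply: nf => L ps e jL fp; have h1 := fp.1; apply: ff' => //.
    apply: fpth_mono fp => t jt tL gt; apply: IH => //; first lia.
    by apply: (Sx_path (ps := ps) (L := L) _ h1 jt tL); rewrite e.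
  + case: (G_odd_ipath ok g) => ps [e ip].
    apply: (ipath_notfinite e) => t jt; case: (ip t jt) => s gt; split => //.
    apply: IH => //; first lia.
    have hs' : forall t', j <= t' -> t' < t -> ps t'.+1 \in dl (ps t') (w t') by move=> t' jt' _; case: (ip t' jt').
    by apply: (Sx_path (ps := ps) (L := t) _ hs' jt (leqnn t)); rewrite e.
case: (mx_att hT1) => q hq e.
have g : GG k q T1 by apply/(rk_spec _ hT1 hq); rewrite e; lia.
have := cl ((2 * n Q).+1 - k) T1 q hT1 hq g.
move/(rk_spec _ hT1 hq); have := rk_le2n q T1; lia.
Qed.

Lemma persist k j1 q : odd k -> j0 <= j1 -> q \in Sx j1 -> rk q j1 = k ->
  forall j, j1 <= j -> exists2 q', q' \in Sx j & rk q' j = k.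
Proof.
move=> ok jj1 hq e.
have g : GG k q j1 by rewrite -e; apply: rk_G.
have ffr : Ffree_in A w (GG k) q j1 by rewrite -e; apply: rk_odd_Ffree => //; rewrite e.
case: (G_odd_ipath ok g) => ps [e0 ip] j le; exists (ps j).
- have hs' : forall t', j1 <= t' -> t' < j -> ps t'.+1 \in dl (ps t') (w t') by move=> t' jt' _; case: (ip t' jt').
  by apply: (Sx_path (ps := ps) (L := j) _ hs' le (leqnn j)); rewrite e0.
- have hs' : forall t', j1 <= t' -> t' < j -> ps t'.+1 \in dl (ps t') (w t') by move=> t' jt' _; case: (ip t' jt').
  have hj : ps j \in Sx j by apply: (Sx_path (ps := ps) (L := j) _ hs' le (leqnn j)); rewrite e0.
  have jj : j0 <= j by lia.
  have gj : GG k (ps j) j by case: (ip j le).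
  have r1 : k <= rk (ps j) j by apply/(rk_spec _ jj hj).
  suff : ~ k < rk (ps j) j by lia.
  move=> lt; have : GG k.+1 (ps j) j by apply/(rk_spec _ jj hj).
  case=> _; rewrite ok; apply.
  apply: (Ffree_later ffr e0 le); exact: ipath_fpth.
Qed.

Lemma tight_all : exists2 T2, T1 <= T2 & forall k, odd k -> k < M ->
  forall j, T2 <= j -> exists2 q, q \in Sx j & rk q j = k.
Proof.
suff : forall b, exists2 T2, T1 <= T2 & forall k, k < b -> odd k -> k < M ->
  forall j, T2 <= j -> exists2 q, q \in Sx j & rk q j = k.
  case/(_ M) => T2 h1 h2; exists T2 => // k ok kM; exact: h2.
elim=> [|b [T2 h1 h2]]; first by exists T1.
case: (boolP (odd b && (b < M))) => [/andP[ob bM]|nb].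
- case: (exists_rank ob bM) => j1 [q [jj1 hq e]].
  exists (maxn T2 j1); first by rewrite leq_max h1.
  move=> k kb ok kM j le.
  case: (ltnP k b) => kb'.
  + apply: h2 => //; exact: leq_trans (leq_maxl _ _) le.
  + have E : k = b by lia. rewrite E; apply: (persist ob jj1 hq e).
    exact: leq_trans (leq_maxr _ _) le.
- exists T2 => // k kb ok kM j le.
  case: (ltnP k b) => kb'; first exact: h2.
  have E : k = b by lia. by rewrite -E ok kM in nb.
Qed.

End Tight.

Section NewRun.
Variables T1 T : nat.
Hypothesis hT1 : j0 <= T1.
Hypothesis hM : forall j, T1 <= j -> mx j = mx T1.
Hypothesis hTT : T1 <= T.
Hypothesis hT : forall k, odd k -> k < mx T1 ->
  forall j, T <= j -> exists2 q, q \in Sx j & rk q j = k.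
Local Notation M := (mx T1).

Definition g j : {ffun Q -> nat} := [ffun q => if q \in Sx j then rk q j else 0].

Lemma rank_g j : T1 <= j -> rank (g j) = M.
Proof.
move=> le; apply/eqP; rewrite eqn_leq; apply/andP; split.
- apply/bigmax_leqP => q _; rewrite ffunE; case: ifP => hq //; rewrite -(hM le); exact: mx_ge.
- case: (mx_att (j := j) _) => [|q hq e]; first lia.
  rewrite -(hM le) -e.
  have : g j q <= rank (g j) := leq_bigmax _.
  by rewrite ffunE hq.
Qed.

Lemma Modd : odd M.
Proof. exact: M_odd hT1 hM. Qed.

Lemma tight_g j : T <= j -> tight (Sx j) (g j).
Proof.
move=> le; have le1 : T1 <= j by lia.
split; first by rewrite rank_g // Modd.
- move=> k ok; rewrite rank_g // => kM.
  case: (ltnP k M) => kM'.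
  + case: (hT ok kM' le) => q hq e; exists q => //; by rewrite ffunE hq.
  + have E : k = M by lia.
    case: (mx_att (j := j) _) => [|q hq e]; first lia.
    exists q => //; by rewrite ffunE hq e hM.
- by move=> q /negbTE hq; rewrite ffunE hq.
Qed.

Definition stp j (s : {set Q} * nat) : {set Q} * nat :=
  if s.1 == set0 then
    (Sx j.+1 :&: [set q | g j.+1 q == (s.2 + 2) %% (M + 1)], (s.2 + 2) %% (M + 1))
  else (delta_set A s.1 (w j) :&: [set q | g j.+1 q == s.2], s.2).

Fixpoint st j : {set Q} * nat :=
  match j with 0 => (set0, 0) | j'.+1 => if j' <= T then (set0, 0) else stp j' (st j') end.

Definition run' j := if j <= T then Q1st (Sx j) else Q2st (Sx j) (st j).1 (g j) (st j).2.

Lemma st_inv j : T < j -> [/\ ~~ odd (st j).2, (st j).2 < M + 1 &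
   (st j).1 \subset Sx j :&: [set q | g j q == (st j).2]].
Proof.
elim: j => [//|j IH] lt /=.
case: (leqP j T) => h /=.
- by split => //; [lia | apply: sub0set].
- case: (IH h) => i1 i2 i3; rewrite /stp; case: eqP => e /=.
  + split.
    * rewrite odd_mod; last by rewrite addn1 /= Modd.
      by rewrite oddD /= addbF.
    * by rewrite ltn_pmod // addn1.
    * exact: subxx.
  + split => //; apply/subsetP => q /setIP[/bigcupP[p hp hq] hg].
    rewrite inE hg andbT; apply/bigcupP; exists p => //.
    by move/subsetP: i3 => /(_ p hp) /setIP[].
Qed.

Lemma inQ2de_at j : T < j -> inQ2de A (Sx j) (st j).1 (g j) (st j).2.
Proof.
move=> lt; have jj : j0 <= j by lia.
case: (st_inv lt) => i1 i2 i3.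
have tg := tight_g (ltnW lt).
split; first split.
- split => q; rewrite ffunE; case: ifP => hq //.
  + by apply: rk_le2n.
  + by move=> qF; apply: rk_F.
- case: tg => h1 h2 _; split => //.
  + move=> k ok kl; case: (h2 k ok kl) => s _ e; by exists s.
  + by move=> q; rewrite inE.
- exact: tg.
- split => //.
  have hm := mx_le2n T1; have od := odd_double_half M; rewrite Modd -muln2 in od.
  lia.
- exact: i3.
- move=> [p [q [hp hq ds]]]; rewrite !ffunE hp hq /ceil_even.
  have := rk_sim jj hp hq ds; lia.
Qed.

Lemma ctrans_new j : ctrans A (inQ2de A) (run' j) (w j) (run' j.+1).
Proof.
rewrite /run'; case: (leqP j.+1 T) => h1.
- have E : (j <= T) = true by lia. by rewrite E.
case: (leqP j T) => h2.
- have es : st j.+1 = (set0, 0) by rewrite /= h2.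
  have hq := inQ2de_at h1; rewrite es in hq.
  rewrite es; split; [exact: hq | by [] | by [] | by [] | apply: tight_g; lia].
- have es : st j.+1 = stp j (st j).
    have E : (j <= T) = false by lia.
    by rewrite /= E.
  have hq := inQ2de_at h1.
  split.
  + by split.
  + move=> q q' hq' hs; rewrite !ffunE hq' (Sx_step hq' hs); apply: rk_mono => //; lia.
  + by rewrite !rank_g //; lia.
  + apply: tight_g; lia.
  + rewrite es /stp; case: eqP => e /=.
    * left; split => //; by rewrite rank_g //; lia.
    * right; split => //; exact/eqP.
Qed.

Lemma st_next k : T < k -> (st k).1 != set0 ->
  st k.+1 = (delta_set A (st k).1 (w k) :&: [set q | g k.+1 q == (st k).2], (st k).2).
Proof.
move=> lt ne; have E : (k <= T) = false by lia.
by rewrite /= E /stp (negbTE ne).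
Qed.

Lemma acc_new N : exists2 k, N <= k & caccepting (inQ2de A) (run' k).
Proof.
set N' := maxn N T.+1.
apply: NNPP => nacc.
have ne : forall k, N' <= k -> (st k).1 != set0.
  move=> k le; apply/negP => /eqP e; apply: nacc; exists k; first by move: le; rewrite geq_max => /andP[].
  have lt : T < k by move: le; rewrite geq_max => /andP[].
  rewrite /run' leqNgt lt /=; split => //; exact: inQ2de_at.
have TN : T < N' by rewrite leq_max ltnSn orbT.
have cst : forall d, (st (N' + d)).2 = (st N').2.
  elim=> [|d IH]; first by rewrite addn0.
  by rewrite addnS st_next ?IH //; [lia | apply: ne; lia].
set c := (st N').2.
have cev : ~~ odd c by case: (st_inv TN).
have node : forall d q, q \in (st (N' + d)).1 -> GG c q (N' + d).
  move=> d q hq; have lt : T < N' + d by lia.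
  case: (st_inv lt) => _ _ /subsetP /(_ q hq) /setIP [hS]; rewrite inE ffunE hS cst => /eqP e.
  apply/(rk_spec _ _ hS); [lia | by rewrite e].
have bt : forall d q', q' \in (st (N' + d)).1 -> exists ps,
    [/\ ps (N' + d) = q', ps N' \in (st N').1 & fpth A w (GG c) N' (N' + d) ps].
  elim=> [|d IH] q' hq'.
  - rewrite addn0 in hq' *; exists (fun _ => q'); split => //.
    split => t jt tj; first lia.
    have -> : t = N' by lia. by have := node 0 q'; rewrite addn0; apply.
  - rewrite addnS st_next in hq'; [|lia|apply: ne; lia].
    case/setIP: hq' => /bigcupP [p hp hs] hg.
    case: (IH p hp) => ps [e1 e2 fp].
    exists (fun t => if t == (N' + d).+1 then q' else ps t); rewrite addnS; split.
    + by rewrite eqxx.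
    + rewrite ifF //; apply/negbTE; rewrite neq_ltn; apply/orP; left; lia.
    + apply: fpth_snoc => //; [lia | by rewrite e1 |].
      have := node d.+1 q'; rewrite addnS; apply.
      rewrite st_next; [|lia|apply: ne; lia].
      by rewrite inE hg andbT; apply/bigcupP; exists p.
apply: (FINC (c := c) (N := N') (X := (st N').1)).
- move=> q hq; case: (st_inv TN) => _ _ /subsetP /(_ q hq) /setIP [hS].
  rewrite inE ffunE hS => /eqP e.
  have jj : j0 <= N' by lia.
  have e' : rk q N' = c by rewrite e.
  rewrite -e'; apply: rk_even_finite => //; by rewrite e'.
- move=> L le.
  have E : L = N' + (L - N') by lia.
  case: (set_0Vmem (st L).1) => [e|[q' hq']]; first by move: (ne L le); rewrite e eqxx.
  rewrite E in hq'; case: (bt _ _ hq') => ps [e1 e2 fp].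
  exists (ps N'), ps; split => //; by rewrite E.
Qed.

End NewRun.

Lemma de_run_exists : clang A (inQ2de A) w.
Proof.
case: (evconst (f := mx) (a := j0) mx_mono) => T1 hT1 hM.
case: (tight_all hT1) => T hTT hT.
exists (run' T1 T); split.
- by rewrite /run' leq0n.
- exact: ctrans_new hT1 hM hTT hT.
- exact: acc_new hT1 hM hTT hT.
Qed.

End Run.



Theorem lemma3 (Q Sigma : finType) (A : BA Q Sigma) :
  0 < #|Sigma| -> complete A ->
  forall w : nat -> Sigma, lang_BSde A w <-> lang_BS A w.
Proof.
move=> _ _ w; split.
- case=> r [r0 hs ha]; exists r; split => //.
  + move=> i; have := hs i; case: (r i) => [S1|S1 O1 f1 i1]; case: (r i.+1) => //=.
    * by move=> S2 O2 f2 i2 [[h _] ? ? ? ?]; split.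
    * by move=> S2 O2 f2 i2 [[[h _] ?] ? ? ? ?]; split.
  + move=> N; case: (ha N) => k le hk; exists k => //; move: hk; case: (r k) => //= S1 O1 f1 i1 [[h _] e]; by split.
- case=> r [r0 hs ha].
  case: (classic (exists j0, isQ2 (r j0))) => [[j0 hj0]|nq].
  + by have := de_run_exists r0 hs ha hj0; apply.
  + have q1 : forall j, isQ2 (r j) = false by move=> j; apply/negP => h; apply: nq; exists j.
    exists r; split => //.
    * move=> i; have := hs i; have := q1 i; have := q1 i.+1.
      by case: (r i) => //; case: (r i.+1).
    * move=> N; case: (ha N) => k le hk; exists k => //; move: hk (q1 k); by case: (r k).
Qed.
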